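(* Let $\mathbf V$ be a locally finite variety of monoids, let $A=\{a_1,\dots,a_d\}$ be a finite alphabet, let $\sim$ be the congruence on $A^*$ given by the identities of $\mathbf V$ (so $A^*/{\sim}$ is the free monoid in $\mathbf V$ over $A$), and let $\sim_1$ be the analogous congruence on $A^*$ for the variety of monoids corresponding to $\mathsf{BPol}_1(\mathcal V)$ (so $A^*/{\sim_1}$ is the free monoid over $A$ in that variety). Define $$\xi:A^*\to (A^*/{\sim}\ \Diamond\ A^*/{\sim})^d,\qquad u\mapsto(\mu_{a_1}(u),\dots,\mu_{a_d}(u)),$$ where each $\mu_{a_i}$ is built from $\varphi=\psi=$ the canonical projection $A^*\to A^*/{\sim}$. Then $\xi(A^* )$ is isomorphic to $A^*/{\sim_1}$. In particular, if $|A^*/{\sim}|=n$, then $|A^*/{\sim_1}|\leq n2^{dn^2}$.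
   Context: $\mathcal V$ denotes the variety of languages corresponding (via Eilenberg's correspondence) to the pseudovariety of finite monoids in $\mathbf V$: a language $L\subseteq A^*$ lies in $\mathcal V(A)$ iff its syntactic monoid belongs to $\mathbf V$. $\mathsf{BPol}_1(\mathcal V)(A)$ is the class of all Boolean combinations of languages $L_0$ and $L_0bL_1$ with $L_0,L_1\in\mathcal V(A)$, $b\in A$; it is a variety of languages, and $A^*/{\sim_1}$ is the free monoid over $A$ in the corresponding variety of monoids, i.e. the smallest monoid recognizing all languages of $\mathsf{BPol}_1(\mathcal V)(A)$. For finite monoids $M,N$, the Schützenberger product $M\Diamond N$ is the set of $2\times2$ matrices $P$ with $P_{1,1}\in M$, $P_{2,2}\in N$, $P_{2,1}=\emptyset$, $P_{1,2}\subseteq M\times N$, with multiplication $(PQ)_{1,1}=P_{1,1}Q_{1,1}$, $(PQ)_{2,2}=P_{2,2}Q_{2,2}$, $(PQ)_{1,2}=\{(P_{1,1}x,y)\mid (x,y)\in Q_{1,2}\}\cup\{(z,tQ_{2,2})\mid (z,t)\in P_{1,2}\}$. Given homomorphisms $\varphi:A^*\to M$, $\psi:A^*\to N$ and $b\in A$, $\mu_b:A^*\to M\Diamond N$ is defined by $(\mu_b(u))_{1,1}=\varphi(u)$, $(\mu_b(u))_{2,2}=\psi(u)$, $(\mu_b(u))_{1,2}=\{(\varphi(u'),\psi(u''))\mid u=u'bu'',\ u',u''\in A^*\}$. *)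

(* Defs.v *)
From mathcomp Require Import all_boot.
Set Implicit Arguments. Unset Strict Implicit. Unset Printing Implicit Defensive.

Record monoid_on (M : Type) := MonoidOn {
  m_mul : M -> M -> M;
  m_one : M;
  m_assoc : forall x y z, m_mul x (m_mul y z) = m_mul (m_mul x y) z;
  m_mul1 : forall x, m_mul m_one x = x;
  m_mulx1 : forall x, m_mul x m_one = x }.

Definition evalw (M : Type) (S : monoid_on M) (X : Type) (h : X -> M) (w : seq X) : M :=
  foldr (fun x m => m_mul S (h x) m) (m_one S) w.

(* An identity is a pair of words over the variables nat; a variety of monoids
   is given by a set E of identities: its members are the monoids satisfying E. *)
Definition identity := (seq nat * seq nat)%type.

Definition sat_identity (M : Type) (S : monoid_on M) (e : identity) : Prop :=
  forall h : nat -> M, evalw S h e.1 = evalw S h e.2.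

Definition in_variety (E : identity -> Prop) (M : Type) (S : monoid_on M) : Prop :=
  forall e, E e -> sat_identity S e.

(* u ~ v : the identity u = v (letters of A used as variables) holds in V,
   i.e. in every monoid of V under every assignment A -> M. *)
Definition simV (E : identity -> Prop) (A : Type) (u v : seq A) : Prop :=
  forall (M : Type) (S : monoid_on M), in_variety E S ->
    forall h : A -> M, evalw S h u = evalw S h v.

Definition locally_finite (E : identity -> Prop) : Prop :=
  forall n : nat, exists s : seq (seq 'I_n),
    forall w : seq 'I_n, exists2 w', w' \in s & simV E w w'.

Definition language (A : Type) := seq A -> Prop.

Definition synt (A : Type) (L : language A) (u v : seq A) : Prop :=
  forall x y : seq A, L (x ++ u ++ y) <-> L (x ++ v ++ y).

Definition substw (A : Type) (s : nat -> seq A) (w : seq nat) : seq A :=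
  flatten (map s w).

(* L in V(A): the syntactic monoid A^*/synt L belongs to V, i.e. satisfies
   every identity of E (an assignment of the variables into A^*/synt L is the
   same as a choice of representatives s : nat -> A^*.) *)
Definition in_calV (E : identity -> Prop) (A : Type) (L : language A) : Prop :=
  forall e, E e -> forall s : nat -> seq A, synt L (substw s e.1) (substw s e.2).

Definition mprod (A : Type) (L0 : language A) (b : A) (L1 : language A) : language A :=
  fun w => exists w0 w1, w = w0 ++ b :: w1 /\ L0 w0 /\ L1 w1.

Inductive boolcomb (A : Type) (G : language A -> Prop) : language A -> Prop :=
  | bc_gen L : G L -> boolcomb G L
  | bc_compl L : boolcomb G L -> boolcomb G (fun w => ~ L w)
  | bc_inter L K : boolcomb G L -> boolcomb G K -> boolcomb G (fun w => L w /\ K w)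
  | bc_union L K : boolcomb G L -> boolcomb G K -> boolcomb G (fun w => L w \/ K w).

Definition BPol1_gen (E : identity -> Prop) (A : Type) (L : language A) : Prop :=
  in_calV E L \/
  exists L0 L1 b, in_calV E L0 /\ in_calV E L1 /\ L = mprod L0 b L1.

Definition BPol1 (E : identity -> Prop) (A : Type) : language A -> Prop :=
  boolcomb (BPol1_gen E (A:=A)).

(* u ~1 v : u and v are identified in the smallest monoid recognizing all
   languages of BPol1(V)(A), i.e. by the intersection of their syntactic
   congruences. *)
Definition sim1 (E : identity -> Prop) (A : Type) (u v : seq A) : Prop :=
  forall L, BPol1 E L -> synt L u v.

(* An element of M <> N: entries (1,1) in M, (2,2) in N, (1,2) a subset of
   M x N (entry (2,1) is always empty and is omitted). *)
Record schutz (M N : Type) := Schutz {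
  s11 : M; s22 : N; s12 : M * N -> Prop }.

Definition schutz_mul (M N : Type) (SM : monoid_on M) (SN : monoid_on N)
  (P Q : schutz M N) : schutz M N :=
  {| s11 := m_mul SM (s11 P) (s11 Q);
     s22 := m_mul SN (s22 P) (s22 Q);
     s12 := fun p => (exists x y, s12 Q (x, y) /\ p = (m_mul SM (s11 P) x, y)) \/
                     (exists z t, s12 P (z, t) /\ p = (z, m_mul SN t (s22 Q))) |}.

Definition mu (A M N : Type) (phi : seq A -> M) (psi : seq A -> N) (b : A) (u : seq A)
  : schutz M N :=
  {| s11 := phi u; s22 := psi u;
     s12 := fun p => exists u' u'', u = u' ++ b :: u'' /\ p = (phi u', psi u'') |}.

(* A^*/~ : the ~-class of u, as a subset of A^* (canonical projection). *)
Definition clsV (E : identity -> Prop) (A : Type) (u : seq A) : seq A -> Prop :=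
  fun v => simV E u v.

Definition xi (E : identity -> Prop) (A : Type) (u : seq A)
  : A -> schutz (seq A -> Prop) (seq A -> Prop) :=
  fun b => mu (clsV E (A:=A)) (clsV E (A:=A)) b u.

Definition pairwise_unrelated (A : Type) (R : seq A -> seq A -> Prop) (s : seq (seq A)) :=
  forall i j, i < size s -> j < size s -> i <> j -> ~ R (nth [::] s i) (nth [::] s j).

Definition nclasses (A : Type) (R : seq A -> seq A -> Prop) (n : nat) : Prop :=
  exists s : seq (seq A), size s = n /\ pairwise_unrelated R s /\
    forall w, exists2 i, i < size s & R w (nth [::] s i).

Definition atmost_classes (A : Type) (R : seq A -> seq A -> Prop) (N : nat) : Prop :=
  forall s : seq (seq A), pairwise_unrelated R s -> size s <= N.

(* Main.v *)
Require Import Defs.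
From mathcomp Require Import all_boot.
From Stdlib Require Import FunctionalExtensionality PropExtensionality ProofIrrelevance ClassicalEpsilon.

Set Implicit Arguments. Unset Strict Implicit. Unset Printing Implicit Defensive.

Section Basics.
Variable E : identity -> Prop.

Lemma evalw_cat (M : Type) (S : monoid_on M) (X : Type) (h : X -> M) (a b : seq X) :
  evalw S h (a ++ b) = m_mul S (evalw S h a) (evalw S h b).
Proof.
elim: a => [|x a IH] /=; first by rewrite m_mul1.
by rewrite IH m_assoc.
Qed.

Lemma evalw_subst (M : Type) (S : monoid_on M) (X : Type) (h : X -> M) (s : nat -> seq X) w :
  evalw S h (substw s w) = evalw S (fun i => evalw S h (s i)) w.
Proof.
elim: w => [|i w IH] //=.
by rewrite /substw /= evalw_cat -IH.
Qed.

Variable A : Type.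

Lemma simV_refl (u : seq A) : simV E u u. Proof. by []. Qed.
Lemma simV_sym (u v : seq A) : simV E u v -> simV E v u.
Proof. by move=> H M S HV h; rewrite (H M S HV h). Qed.
Lemma simV_trans (u v w : seq A) : simV E u v -> simV E v w -> simV E u w.
Proof. by move=> H1 H2 M S HV h; rewrite (H1 M S HV h) (H2 M S HV h). Qed.

Lemma simV_cong (u v x y : seq A) : simV E u v -> simV E (x ++ u ++ y) (x ++ v ++ y).
Proof. by move=> H M S HV h; rewrite !evalw_cat (H M S HV h). Qed.

Lemma simV_subst e (s : nat -> seq A) : E e -> simV E (substw s e.1) (substw s e.2).
Proof. by move=> He M S HV h; rewrite !evalw_subst; apply: HV. Qed.

Lemma cls_in_V (u : seq A) : in_calV E (clsV E u).
Proof.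
move=> e He s x y; rewrite /clsV; split => H.
  exact: simV_trans H (simV_cong x y (simV_subst s He)).
exact: simV_trans H (simV_sym (simV_cong x y (simV_subst s He))).
Qed.

Lemma cls_eq (u v : seq A) : simV E u v -> clsV E u = clsV E v.
Proof.
move=> H; apply: functional_extensionality => w; apply: propositional_extensionality.
rewrite /clsV; split => H'; [exact: simV_trans (simV_sym H) H' | exact: simV_trans H H'].
Qed.

Lemma cls_sim (u v : seq A) : clsV E u = clsV E v -> simV E u v.
Proof. move=> H; have : clsV E v v by []. by rewrite -H. Qed.

Section Synt.
Variable L : language A.
Definition quo (x : seq A) : seq A -> Prop := fun z => L (x ++ z).
Definition T (w : seq A) : (seq A -> Prop) -> (seq A -> Prop) :=
  fun K z => exists x, K = quo x /\ L (x ++ w ++ z).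

Lemma T_quo w x z : T w (quo x) z <-> L (x ++ w ++ z).
Proof.
split; last by move=> H; exists x; split.
move=> [x' [Hq HL]]; change (quo x (w ++ z)); by rewrite Hq.
Qed.

Lemma T_comp w1 w2 K : T w2 (T w1 K) = T (w1 ++ w2) K.
Proof.
apply: functional_extensionality => z; apply: propositional_extensionality; split.
  move=> [x2 [Hq HL]].
  have : T w1 K (w2 ++ z) by rewrite Hq.
  by move=> [x [HK HL']]; exists x; split => //; move: HL'; rewrite -!catA.
move=> [x [HK HL]]; exists (x ++ w1); split; last by move: HL; rewrite -!catA.
apply: functional_extensionality => z'; apply: propositional_extensionality.
by rewrite HK T_quo /quo -catA.
Qed.

Lemma T_synt a b : synt L a b -> T a = T b.
Proof.
move=> H; apply: functional_extensionality => K; apply: functional_extensionality => z.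
apply: propositional_extensionality.
by split => -[x [HK HL]]; exists x; split => //; apply/(H x z).
Qed.

Definition M := {f | exists w, f = T w}.

Lemma Mmul_proof (f g : M) : exists w, (fun K => proj1_sig g (proj1_sig f K)) = T w.
Proof.
case: f => f [w1 Hf]; case: g => g [w2 Hg] /=; subst f g; exists (w1 ++ w2).
by apply: functional_extensionality => K; rewrite T_comp.
Qed.

Definition Mmul (f g : M) : M := exist _ _ (Mmul_proof f g).
Definition Mone : M := exist _ (T [::]) (ex_intro _ [::] erefl).

Lemma M_eq (f g : M) : proj1_sig f = proj1_sig g -> f = g.
Proof.
case: f => f pf; case: g => g pg /= E'; subst g; f_equal; apply: proof_irrelevance.
Qed.

Lemma Massoc x y z : Mmul x (Mmul y z) = Mmul (Mmul x y) z.
Proof. by apply: M_eq. Qed.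
Lemma Mmul1 x : Mmul Mone x = x.
Proof.
apply: M_eq; case: x => f [w Hf] /=; subst f.
by apply: functional_extensionality => K; rewrite T_comp.
Qed.
Lemma Mmulx1 x : Mmul x Mone = x.
Proof.
apply: M_eq; case: x => f [w Hf] /=; subst f.
by apply: functional_extensionality => K; rewrite T_comp cats0.
Qed.

Definition SM : monoid_on M := @MonoidOn M Mmul Mone Massoc Mmul1 Mmulx1.

Lemma eval_val (X : Type) (h : X -> M) (s : X -> seq A) :
  (forall i, proj1_sig (h i) = T (s i)) ->
  forall w, proj1_sig (evalw SM h w) = T (flatten (map s w)).
Proof.
move=> Hs; elim => [|i w IH] //=.
rewrite IH Hs; apply: functional_extensionality => K; by rewrite T_comp.
Qed.

Lemma flatten_single (w : seq A) : flatten (map (fun a => [:: a]) w) = w.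
Proof. by elim: w => //= a w ->. Qed.

Lemma synt_of_simV (u v : seq A) : in_calV E L -> simV E u v -> synt L u v.
Proof.
move=> HL Huv.
have HV : in_variety E SM.
  move=> e He h.
  pose s i := proj1_sig (constructive_indefinite_description _ (proj2_sig (h i))).
  have Hs : forall i, proj1_sig (h i) = T (s i).
    move=> i; exact: (proj2_sig (constructive_indefinite_description _ (proj2_sig (h i)))).
  apply: M_eq; rewrite !(eval_val Hs); apply: T_synt; exact: HL.
pose h (a : A) : M := exist _ (T [:: a]) (ex_intro _ [:: a] erefl).
have Hh : forall i, proj1_sig (h i) = T [:: i] by [].
have := Huv M SM HV h.
move=> /(congr1 (@proj1_sig _ _)); rewrite !(eval_val Hh) !flatten_single => HT x y.
by rewrite -!T_quo HT.
Qed.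
End Synt.

End Basics.

Section Main.
Variable E : identity -> Prop.
Variable A : Type.

Lemma cat_split (a c w0 w1 : seq A) (b : A) : a ++ c = w0 ++ b :: w1 ->
  (exists a', a = w0 ++ b :: a' /\ w1 = a' ++ c) \/
  (exists c0, c = c0 ++ b :: w1 /\ w0 = a ++ c0).
Proof.
elim: a w0 => [|x a IH] w0 /=.
  by move=> ->; right; exists w0.
case: w0 => [|y w0] /= [] Hx Hr.
  by left; exists a; subst.
subst y; case: (IH _ Hr) => [[a' [-> ->]]|[c0 [-> ->]]].
  by left; exists a'.
by right; exists c0.
Qed.

Definition split_sim (u v : seq A) := forall b u' u'', u = u' ++ b :: u'' ->
  exists v' v'', v = v' ++ b :: v'' /\ simV E u' v' /\ simV E u'' v''.

Definition SS (u v : seq A) := simV E u v /\ split_sim u v /\ split_sim v u.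

Lemma mprod_transfer L0 L1 b (u v x y : seq A) : in_calV E L0 -> in_calV E L1 ->
  simV E u v -> split_sim u v -> mprod L0 b L1 (x ++ u ++ y) -> mprod L0 b L1 (x ++ v ++ y).
Proof.
move=> H0V H1V Huv Hs [w0 [w1 [Heq [H0 H1]]]].
case: (cat_split Heq) => [[x' [Hx Hw1]]|[c0 [Hc Hw0]]].
  exists w0, (x' ++ v ++ y); split; first by rewrite Hx -catA.
  split => //; rewrite Hw1 in H1; exact/(synt_of_simV H1V Huv x' y).
case: (cat_split Hc) => [[u' [Hu Hw1]]|[y0 [Hy Hc0]]].
  have [v' [v'' [Hv [S1 S2]]]] := Hs _ _ _ Hu.
  exists (x ++ v'), (v'' ++ y); split; first by rewrite Hv -!catA.
  split.
    have := synt_of_simV H0V S1 x [::]; rewrite !cats0 => <-; by rewrite -Hw0.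
  rewrite Hw1 in H1; exact/(synt_of_simV H1V S2 [::] y).
exists (x ++ v ++ y0), w1; split; first by rewrite Hy -!catA.
split => //.
rewrite Hw0 Hc0 in H0; exact/(synt_of_simV H0V Huv x y0).
Qed.

Lemma SS_sim1 (u v : seq A) : SS u v -> sim1 E u v.
Proof.
move=> [Huv [S1 S2]] L HL; elim: HL.
- move=> L' [HV|[L0 [L1 [b [H0 [H1 ->]]]]]].
    exact: (synt_of_simV HV Huv).
  move=> x y; split; apply: mprod_transfer => //; exact: simV_sym.
- by move=> L' _ IH x y; have := IH x y; tauto.
- by move=> L' K _ IH1 _ IH2 x y; have := IH1 x y; have := IH2 x y; tauto.
- by move=> L' K _ IH1 _ IH2 x y; have := IH1 x y; have := IH2 x y; tauto.
Qed.

Lemma sim1_sym (u v : seq A) : sim1 E u v -> sim1 E v u.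
Proof. by move=> H L HL x y; have := H L HL x y; tauto. Qed.

Lemma sim1_simV (u v : seq A) : sim1 E u v -> simV E u v.
Proof.
move=> H.
have := H _ (bc_gen (or_introl (cls_in_V (E:=E) u))) [::] [::].
rewrite /= !cats0 => -[H1 _]; exact: H1.
Qed.

Lemma sim1_split (u v : seq A) : sim1 E u v -> split_sim u v.
Proof.
move=> H b u' u'' Hu.
have HL : BPol1 E (mprod (clsV E u') b (clsV E u'')).
  apply: bc_gen; right; exists (clsV E u'), (clsV E u''), b; split; last split => //;
  exact: cls_in_V.
have := H _ HL [::] [::]; rewrite /= !cats0 => -[H1 _].
have [|v' [v'' [Hv [S1 S2]]]] := H1.
  by exists u', u''.
by exists v', v''.
Qed.

Lemma sim1_SS (u v : seq A) : sim1 E u v -> SS u v.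
Proof.
move=> H; split; first exact: sim1_simV.
split; apply: sim1_split => //; exact: sim1_sym.
Qed.

Lemma SS_sym (u v : seq A) : SS u v -> SS v u.
Proof. by move=> [H [S1 S2]]; split; [exact: simV_sym|]. Qed.

Lemma SS_xi (u v : seq A) : SS u v -> xi E u = xi E v.
Proof.
move=> HS; apply: functional_extensionality => b.
rewrite /xi /mu (cls_eq (proj1 HS)); f_equal.
apply: functional_extensionality => p; apply: propositional_extensionality.
suff gen : forall u v, SS u v -> forall p,
  (exists u' u'', u = u' ++ b :: u'' /\ p = (clsV E u', clsV E u'')) ->
  (exists v' v'', v = v' ++ b :: v'' /\ p = (clsV E v', clsV E v'')).
  split; apply: gen => //; exact: SS_sym.
move=> {HS p}u {}v [_ [S1 _]] p [u' [u'' [Hu ->]]].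
have [v' [v'' [Hv [H1 H2]]]] := S1 _ _ _ Hu.
by exists v', v''; rewrite (cls_eq H1) (cls_eq H2).
Qed.

Lemma xi_simV (u v : seq A) : xi E u = xi E v -> simV E u v.
Proof.
move=> H.
have Hb : forall b : A, simV E u v.
  move=> b; exact (cls_sim (congr1 (fun f => s11 (f b)) H)).
case: u H Hb => [|a u] H Hb; last exact: Hb a.
case: v H Hb => [|a v] H Hb; last exact: Hb a.
exact: simV_refl.
Qed.

Lemma xi_split (u v : seq A) : xi E u = xi E v -> split_sim u v.
Proof.
move=> H b u' u'' Hu.
have : s12 (xi E u b) (clsV E u', clsV E u'') by exists u', u''.
rewrite H => -[v' [v'' [Hv [H1 H2]]]].
by exists v', v''; split => //; split; apply: cls_sim.
Qed.

Lemma xi_SS (u v : seq A) : xi E u = xi E v -> SS u v.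
Proof.
move=> H; split; first exact: xi_simV.
by split; apply: xi_split.
Qed.
End Main.

Section Count.
Variable E : identity -> Prop.
Variable A : finType.
Variable n : nat.
Variable r : seq (seq A).
Hypothesis Hsize : size r = n.
Hypothesis Hcover : forall w, exists2 i, i < size r & simV E w (nth [::] r i).

Lemma idx_ex (w : seq A) : exists i : 'I_n, simV E w (nth [::] r i).
Proof.
have [i Hi Hw] := Hcover w; rewrite Hsize in Hi.
by exists (Ordinal Hi).
Qed.

Definition idx (w : seq A) : 'I_n :=
  proj1_sig (constructive_indefinite_description _ (idx_ex w)).

Lemma idx_spec w : simV E w (nth [::] r (idx w)).
Proof. exact: (proj2_sig (constructive_indefinite_description _ (idx_ex w))). Qed.

Lemma idx_eq u v : idx u = idx v -> simV E u v.
Proof.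
move=> H; apply: (simV_trans (idx_spec u)); rewrite H; apply: simV_sym; exact: idx_spec.
Qed.

Definition Pb (P : Prop) : bool := if excluded_middle_informative P then true else false.
Lemma PbP (P : Prop) : Pb P <-> P.
Proof. by rewrite /Pb; case: excluded_middle_informative. Qed.

Definition code (u : seq A) : 'I_n * {ffun A -> {set 'I_n * 'I_n}} :=
  (idx u, [ffun b => [set p : 'I_n * 'I_n |
     Pb (exists u' u'', u = u' ++ b :: u'' /\ idx u' = p.1 /\ idx u'' = p.2)]]).

Lemma code_split u v : (code u).2 = (code v).2 -> split_sim E u v.
Proof.
move=> H b u' u'' Hu.
have : (idx u', idx u'') \in (code u).2 b.
  by rewrite ffunE inE; apply/PbP; exists u', u''.
rewrite H ffunE inE => /PbP [v' [v'' [Hv [E1 E2]]]].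
by exists v', v''; split => //; split; apply: idx_eq.
Qed.

Lemma code_SS u v : code u = code v -> SS E u v.
Proof.
move=> H; split; first by apply: idx_eq; exact: (congr1 fst H).
by split; apply: code_split; rewrite H.
Qed.
End Count.

Theorem proposition7 (E : identity -> Prop) (A : finType) :
  locally_finite E ->
  (forall u v : seq A, xi E u = xi E v <-> sim1 E u v) /\
  (forall n : nat, nclasses (simV E (A:=A)) n ->
     atmost_classes (sim1 E (A:=A)) (n * 2 ^ (#|A| * n ^ 2))).
Proof.
move=> _; split.
  by move=> u v; split => H; [apply: SS_sim1; exact: xi_SS | apply: SS_xi; exact: sim1_SS].
move=> n [r [Hsize [_ Hcover]]] s Hs.
pose c := code Hsize Hcover.
have U : uniq (map c s).
  apply/(uniqP (c [::])) => i j; rewrite !inE size_map => Hi Hj.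
  rewrite !(nth_map [::]) // => Hc.
  case: (eqVneq i j) => // /eqP Hne; exfalso.
  apply: (Hs i j Hi Hj Hne); apply: SS_sim1; exact: code_SS Hc.
have -> : n * 2 ^ (#|A| * n ^ 2) = #|{: 'I_n * {ffun A -> {set 'I_n * 'I_n}}}|.
  have cs : forall T : finType, #|{: {set T}}| = 2 ^ #|T|.
    by move=> T; rewrite -[LHS]cardsT -powersetT card_powerset cardsT.
  rewrite card_prod card_ord card_ffun cs card_prod card_ord -expnM.
  by rewrite -mulnn [#|A| * _]mulnC.
rewrite -(size_map c) -(card_uniqP U); exact: max_card.
Qed.
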